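(* Let $\mathcal{R}$ be a probabilistic term rewrite system (PTRS) and let $\mathcal{A}(\mathcal{R})$ denote its set of canonical annotated dependency pairs. Then for every basic term $t \in \mathcal{T}_B(\mathcal{R})$ we have \[ \operatorname{edh}_{\mathcal{R}}(t) = \operatorname{edh}_{\langle \mathcal{A}(\mathcal{R}), \mathcal{A}(\mathcal{R}) \rangle}(t), \] and consequently $\iota_{\mathcal{R}} = \iota_{\langle \mathcal{A}(\mathcal{R}), \mathcal{A}(\mathcal{R}) \rangle}$.
   Context: Terms: $\Sigma$ is a finite signature, $\mathcal{V}$ a set of variables, $\mathcal{T}=\mathcal{T}(\Sigma,\mathcal{V})$ the terms; $t|_\pi$ is the subterm at position $\pi$, $t[r]_\pi$ the replacement, $\operatorname{root}(t)$ the root symbol, $\mathcal{V}(t)$ the variables of $t$, and $|t|$ the number of occurrences of function symbols and variables in $t$. A PTRS $\mathcal{R}$ is a finite set of rules $\ell \to \{p_1:r_1,\dots,p_k:r_k\}$ with $\ell\in\mathcal{T}\setminus\mathcal{V}$, $r_j\in\mathcal{T}$, $0<p_j\le 1$, $\sum_j p_j=1$ (a finite multiset of pairs), and $\mathcal{V}(r_j)\subseteq\mathcal{V}(\ell)$. Defined symbols $\mathcal{D}=\{\operatorname{root}(\ell)\mid \ell\to\mu\in\mathcal{R}\}$, constructors $\mathcal{C}=\Sigma\setminus\mathcal{D}$. A term $f(t_1,\dots,t_k)$ is basic if $f\in\mathcal{D}$ and all $t_i\in\mathcal{T}(\mathcal{C},\mathcal{V})$; $\mathcal{T}_B(\mathcal{R})$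 is the set of basic terms. Innermost rewriting: $s \to_{\mathcal{R}} \{p_1:s[r_1\sigma]_\pi,\dots,p_k:s[r_k\sigma]_\pi\}$ if there are a position $\pi$, a rule $\ell\to\{p_1:r_1,\dots,p_k:r_k\}\in\mathcal{R}$ and a substitution $\sigma$ with $s|_\pi=\ell\sigma$ and every proper subterm of $\ell\sigma$ is a normal form w.r.t. $\mathcal{R}$. A rewrite sequence tree (RST) is a (possibly infinite) directed tree with finitely many children per node, each node $v$ labeled $(p_v:t_v)$ with $p_v\in(0,1]$, $t_v\in\mathcal{T}$, root probability $1$, such that if $v$ has children $w_1,\dots,w_k$ ($k\ge1$) then $t_v \to_{\mathcal{R}} \{\tfrac{p_{w_1}}{p_v}:t_{w_1},\dots,\tfrac{p_{w_k}}{p_v}:t_{w_k}\}$ (innermost). For an RST $\mathfrak{T}$, $\operatorname{edl}(\mathfrak{T})=\sum_{v \text{ inner node}} p_v$; $\operatorname{edh}_{\mathcal{R}}(t)=\sup\{\operatorname{edl}(\mathfrak{T})\mid \mathfrak{T}$ an RST with root term $t\}$; $\operatorname{eirc}_{\mathcal{R}}(n)=\sup\{\operatorname{edh}_{\mathcal{R}}(t)\mid t\in\mathcal{T}_B(\mathcal{R}),|t|\le n\}$, and $\iota_{\mathcal{R}}=\iota(\operatorname{eirc}_{\mathcal{R}})$. Complexities: $\mathfrak{C}=\{\mathrm{Pol}_0,\mathrm{Pol}_1,\mathrm{Pol}_2,\dots,\mathrm{Exp},\mathrm{2\text{-}Exp},\mathrm{Fin},\omega\}$ ordered $\mathrm{Pol}_0\sqsubset\mathrm{Pol}_1\sqsubset\dots\sqsubset\mathrm{Exp}\sqsubset\mathrm{2\text{-}Exp}\sqsubset\mathrm{Fin}\sqsubset\omega$.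 For $f:\mathbb{N}\to\mathbb{N}\cup\{\omega\}$: $\iota(f)=\mathrm{Pol}_a$ for the smallest $a$ with $f(n)\in O(n^a)$; otherwise $\mathrm{Exp}$ if $f(n)\in O(2^{\mathrm{pol}(n)})$ for a polynomial $\mathrm{pol}$; otherwise $\mathrm{2\text{-}Exp}$ if $f(n)\in O(2^{2^{\mathrm{pol}(n)}})$; otherwise $\mathrm{Fin}$ if $f(n)\neq\omega$ for all $n$; otherwise $\omega$. Annotations: for each $f\in\mathcal{D}$ a fresh symbol $f^\sharp$ of the same arity; $\mathcal{T}^\sharp$ are terms over $\Sigma\cup\{f^\sharp\mid f\in\mathcal{D}\}$. For $t=f(t_1,\dots,t_k)$ with $f\in\mathcal{D}$, $t^\sharp=f^\sharp(t_1,\dots,t_k)$. $\flat(t)$ removes all annotations; $\sharp_{\mathcal{D}}(t)$ annotates every defined symbol of $t$; $\flat^{\uparrow}_\pi(t)$ removes all annotations strictly above position $\pi$. An annotated dependency pair (ADP) is $\ell\to\{p_1:r_1,\dots,p_k:r_k\}^m$ with $\ell\in\mathcal{T}\setminus\mathcal{V}$, $r_j\in\mathcal{T}^\sharp$, $\mathcal{V}(r_j)\subseteq\mathcal{V}(\ell)$, probabilities as before, and flag $m\in\{\mathsf{true},\mathsf{false}\}$. The canonical ADP of a rule $\ell\to\{p_1:r_1,\dots,p_k:r_k\}$ is $\ell\to\{p_1:\sharp_{\mathcal{D}}(r_1),\dots,p_k:\sharp_{\mathcal{D}}(r_k)\}^{\mathsf{true}}$ and $\mathcal{A}(\mathcal{R})$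 is the set of canonical ADPs of all rules of $\mathcal{R}$. For a set $\mathcal{P}$ of ADPs, defined symbols, constructors and basic terms are defined via the left-hand sides as for PTRSs. Rewriting with a finite set $\mathcal{P}$ of ADPs: $s\in\mathcal{T}^\sharp$ rewrites to $\{p_1:t_1,\dots,p_k:t_k\}$ if there is a position $\pi$ of $s$ carrying a defined or annotated symbol, an ADP $\ell\to\{p_1:r_1,\dots,p_k:r_k\}^m\in\mathcal{P}$ and $\sigma$ with $\flat(s|_\pi)=\ell\sigma$ and all proper subterms of $\ell\sigma$ are normal forms w.r.t. this rewrite relation, and: (at) if $m=\mathsf{true}$ and $s$ is annotated at $\pi$: $t_j=s[r_j\sigma]_\pi$; (nt) if $m=\mathsf{true}$ and not annotated at $\pi$: $t_j=s[\flat(r_j)\sigma]_\pi$; (af) if $m=\mathsf{false}$ and annotated at $\pi$: $t_j=\flat^\uparrow_\pi(s[r_j\sigma]_\pi)$; (nf) if $m=\mathsf{false}$ and not annotated: $t_j=\flat^\uparrow_\pi(s[\flat(r_j)\sigma]_\pi)$. A $\mathcal{P}$-chain tree is defined like an RST but with terms in $\mathcal{T}^\sharp$ and steps of this relation; for an inner node $v$ one records the used ADP and kind of step. For $\mathcal{S}\subseteq\mathcal{P}$, $\operatorname{edl}_{\langle\mathcal{P},\mathcal{S}\rangle}(\mathfrak{T})$ is the sum of $p_v$ over inner nodes $v$ rewritten by an (at)- or (af)-step with an ADP from $\mathcal{S}$; for a basic term $t$, $\operatorname{edh}_{\langle\mathcal{P},\mathcal{S}\rangle}(t)$ is the supremum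 of $\operatorname{edl}_{\langle\mathcal{P},\mathcal{S}\rangle}(\mathfrak{T})$ over all $\mathcal{P}$-chain trees whose root term is $t^\sharp$; $\operatorname{eirc}_{\langle\mathcal{P},\mathcal{S}\rangle}(n)=\sup\{\operatorname{edh}_{\langle\mathcal{P},\mathcal{S}\rangle}(t)\mid t$ basic w.r.t. $\mathcal{P}$, $|t|\le n\}$ and $\iota_{\langle\mathcal{P},\mathcal{S}\rangle}=\iota(\operatorname{eirc}_{\langle\mathcal{P},\mathcal{S}\rangle})$. *)

(* Defs.v *)
From HB Require Import structures.
From mathcomp Require Import all_boot all_order all_algebra.
From mathcomp Require Import all_classical all_reals.
From mathcomp Require Import ereal esum exp.
From Stdlib Require List Permutation.

Set Implicit Arguments.
Unset Strict Implicit.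
Unset Printing Implicit Defensive.

Import Order.TTheory GRing.Theory Num.Theory.
Local Open Scope classical_set_scope.
Local Open Scope ring_scope.

(* A single datatype is used for ordinary and annotated terms: the    *)
(* boolean flag of [Fun f b ts] says whether the symbol is f^# (b =   *)
(* true) or f (b = false).  Ordinary terms are those with no flag set.*)

Section Terms.
Variables (F : finType) (V : Type).

Inductive term : Type :=
| Var of V
| Fun of F & bool & seq term.

Fixpoint tsize (t : term) : nat :=
  match t with
  | Var _ => 1
  | Fun _ _ ts => (sumn (map tsize ts)).+1
  end.

Fixpoint vars (t : term) : seq V :=
  match t with
  | Var x => [:: x]
  | Fun _ _ ts => flatten (map vars ts)
  end.

Fixpoint subst (s : V -> term) (t : term) : term :=
  match t with
  | Var x => s x
  | Fun f b ts => Fun f b (map (subst s) ts)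
  end.

Fixpoint noann (t : term) : bool :=
  match t with
  | Var _ => true
  | Fun _ b ts => ~~ b && all noann ts
  end.

Fixpoint flat (t : term) : term :=
  match t with
  | Var x => Var x
  | Fun f _ ts => Fun f false (map flat ts)
  end.

Fixpoint sharpD (D : pred F) (t : term) : term :=
  match t with
  | Var x => Var x
  | Fun f _ ts => Fun f (f \in D) (map (sharpD D) ts)
  end.

Definition sharp_root (t : term) : term :=
  match t with
  | Var x => Var x
  | Fun f _ ts => Fun f true ts
  end.

Definition root_is (f : F) (t : term) : bool :=
  if t is Fun g _ _ then g == f else false.

Fixpoint wf (ar : F -> nat) (D : pred F) (t : term) : bool :=
  match t with
  | Var _ => true
  | Fun f b ts => [&& size ts == ar f, b ==> (f \in D) & all (wf ar D) ts]
  end.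

Fixpoint constr_term (D : pred F) (t : term) : bool :=
  match t with
  | Var _ => true
  | Fun f b ts => [&& ~~ b, f \notin D & all (constr_term D) ts]
  end.

Definition basic (D : pred F) (t : term) : bool :=
  match t with
  | Var _ => false
  | Fun f b ts => [&& ~~ b, f \in D & all (constr_term D) ts]
  end.

(* Positions are sequences of (0-based) argument indices. *)
Fixpoint subterm (t : term) (pi : seq nat) : option term :=
  match pi with
  | [::] => Some t
  | i :: pi' =>
      match t with
      | Var _ => None
      | Fun _ _ ts => if onth ts i is Some u then subterm u pi' else None
      end
  end.

Fixpoint replace (pi : seq nat) (t s : term) : term :=
  match pi with
  | [::] => s
  | i :: pi' =>
      match t with
      | Var x => Var x
      | Fun f b ts =>
          Fun f b [seq (if ju.1 == i then replace pi' ju.2 s else ju.2)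
                  | ju <- zip (iota 0 (size ts)) ts]
      end
  end.

Fixpoint flat_above (pi : seq nat) (t : term) : term :=
  match pi with
  | [::] => t
  | i :: pi' =>
      match t with
      | Var x => Var x
      | Fun f _ ts =>
          Fun f false [seq (if ju.1 == i then flat_above pi' ju.2 else ju.2)
                      | ju <- zip (iota 0 (size ts)) ts]
      end
  end.

Definition proper_subterm (u t : term) : Prop :=
  exists pi, pi <> [::] /\ subterm t pi = Some u.

End Terms.

Arguments Var {F V}.

(* A tree is a partial labelling of node addresses (seq nat): the     *)
(* i-th child of node v is (i :: v); the root is [::].                *)

Section Trees.
Variable L : Type.

Definition is_tree (lab : seq nat -> option L) : Prop :=
  [/\ lab [::] <> None,
      (forall v i, lab (i :: v) <> None -> lab v <> None) &
      (forall v, lab v <> None ->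
         exists k : nat, forall i, lab (i :: v) <> None <-> (i < k)%N)].

Definition inner (lab : seq nat -> option L) (v : seq nat) : Prop :=
  lab v <> None /\ exists i, lab (i :: v) <> None.

Definition children (lab : seq nat -> option L) (v : seq nat) (k : nat) : seq L :=
  pmap (fun i => lab (i :: v)) (iota 0 k).

End Trees.

Section PTRS.
Variables (R : realType) (F : finType) (ar : F -> nat) (V : Type).

Local Notation term := (term F V).

Record rule := Rule { lhs : term; rhs : seq (R * term) }.

Definition defsR (Rs : seq rule) : pred F :=
  fun f => has (fun r => root_is f (lhs r)) Rs.

Definition is_PTRS (Rs : seq rule) : Prop :=
  forall r, List.In r Rs ->
    [/\ exists f b ts, lhs r = Fun f b ts,
        wf ar (defsR Rs) (lhs r) && noann (lhs r),
        \sum_(pu <- rhs r) pu.1 = 1 &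
        forall p u, List.In (p, u) (rhs r) ->
          [/\ 0 < p <= 1, wf ar (defsR Rs) u && noann u &
              forall x, List.In x (vars u) -> List.In x (vars (lhs r))]].

Definition NF_R (Rs : seq rule) (u : term) : Prop :=
  ~ exists pi r (sg : V -> term),
      List.In r Rs /\ subterm u pi = Some (subst sg (lhs r)).

Definition step_R (Rs : seq rule) (s : term) (res : seq (R * term)) : Prop :=
  exists pi r (sg : V -> term),
    [/\ List.In r Rs,
        subterm s pi = Some (subst sg (lhs r)),
        (forall u, proper_subterm u (subst sg (lhs r)) -> NF_R Rs u) &
        res = [seq (pu.1, replace pi s (subst sg pu.2)) | pu <- rhs r]].

Definition lab_p (x : option (R * term)) : R :=
  if x is Some pt then pt.1 else 0.

Definition isRST (Rs : seq rule) (lab : seq nat -> option (R * term)) (t : term) : Prop :=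
  [/\ is_tree lab,
      lab [::] = Some (1, t),
      (forall v p u, lab v = Some (p, u) ->
          0 < p <= 1 /\ wf ar (defsR Rs) u && noann u) &
      (forall v p u k, lab v = Some (p, u) ->
          (forall i, lab (i :: v) <> None <-> (i < k)%N) -> (0 < k)%N ->
          exists res, step_R Rs u res /\
            Permutation.Permutation res
              [seq (pu.1 / p, pu.2) | pu <- children lab v k])].

Definition edl (lab : seq nat -> option (R * term)) : \bar R :=
  \esum_(v in [set v | inner lab v]) (lab_p (lab v))%:E.

Definition edh (Rs : seq rule) (t : term) : \bar R :=
  ereal_sup [set edl lab | lab in [set lab | isRST Rs lab t]].

Definition eirc (Rs : seq rule) (n : nat) : \bar R :=
  ereal_sup [set edh Rs t | t in
    [set t | wf ar (defsR Rs) t && basic (defsR Rs) t && (tsize t <= n)%N]].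

Record adp := ADP { alhs : term; arhs : seq (R * term); aflag : bool }.

Definition defsP (P : seq adp) : pred F :=
  fun f => has (fun a => root_is f (alhs a)) P.

Definition canonical_adp (Rs : seq rule) (r : rule) : adp :=
  ADP (lhs r) [seq (pu.1, sharpD (defsR Rs) pu.2) | pu <- rhs r] true.

Definition ADPs (Rs : seq rule) : seq adp := map (canonical_adp Rs) Rs.

Definition NF_P (P : seq adp) (u : term) : Prop :=
  ~ exists pi a (sg : V -> term) f b ts,
      [/\ List.In a P, subterm u pi = Some (Fun f b ts),
          (f \in defsP P) || b &
          flat (Fun f b ts) = subst sg (alhs a)].

Definition adp_result (m ann : bool) (pi : seq nat) (s : term)
    (sg : V -> term) (r : term) : term :=
  let t := replace pi s (subst sg (if ann then r else flat r)) in
  if m then t else flat_above pi t.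

(* step of P using ADP a; ann = whether s is annotated at the position,
   i.e. whether the step is an (at)/(af)-step *)
Definition adp_step (P : seq adp) (s : term) (a : adp) (ann : bool)
    (res : seq (R * term)) : Prop :=
  exists pi (sg : V -> term) f ts,
    [/\ List.In a P,
        subterm s pi = Some (Fun f ann ts) /\ (f \in defsP P) || ann,
        flat (Fun f ann ts) = subst sg (alhs a),
        (forall u, proper_subterm u (subst sg (alhs a)) -> NF_P P u) &
        res = [seq (pu.1, adp_result (aflag a) ann pi s sg pu.2) | pu <- arhs a]].

(* P-chain trees with root term t; info v records the ADP used at the
   inner node v and whether the step was annotated at the position *)
Definition isChainTree (P : seq adp) (lab : seq nat -> option (R * term))
    (info : seq nat -> adp * bool) (t : term) : Prop :=
  [/\ is_tree lab,
      lab [::] = Some (1, t),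
      (forall v p u, lab v = Some (p, u) -> 0 < p <= 1 /\ wf ar (defsP P) u) &
      (forall v p u k, lab v = Some (p, u) ->
          (forall i, lab (i :: v) <> None <-> (i < k)%N) -> (0 < k)%N ->
          exists res, adp_step P u (info v).1 (info v).2 res /\
            Permutation.Permutation res
              [seq (pu.1 / p, pu.2) | pu <- children lab v k])].

Definition edlPS (S : seq adp) (lab : seq nat -> option (R * term))
    (info : seq nat -> adp * bool) : \bar R :=
  \esum_(v in [set v | inner lab v /\ List.In (info v).1 S /\ (info v).2])
     (lab_p (lab v))%:E.

Definition edhPS (P S : seq adp) (t : term) : \bar R :=
  ereal_sup [set edlPS S li.1 li.2 | li in
    [set li | isChainTree P li.1 li.2 (sharp_root t)]].

Definition eircPS (P S : seq adp) (n : nat) : \bar R :=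
  ereal_sup [set edhPS P S t | t in
    [set t | wf ar (defsP P) t && basic (defsP P) t && (tsize t <= n)%N]].

End PTRS.

Inductive cplx := Pol of nat | Exp | TwoExp | Fin | Omega.

Section Iota.
Variable R : realType.

Definition bigO (f : nat -> \bar R) (g : nat -> R) : Prop :=
  exists c : R, 0 < c /\ exists N : nat,
    forall n, (N <= n)%N -> (f n <= (c * g n)%:E)%E.

Definition isPol (f : nat -> \bar R) (a : nat) : Prop :=
  bigO f (fun n => n%:R ^+ a).

Definition isExp (f : nat -> \bar R) : Prop :=
  exists p : {poly R}, bigO f (fun n => 2 `^ p.[n%:R]).

Definition is2Exp (f : nat -> \bar R) : Prop :=
  exists p : {poly R}, bigO f (fun n => 2 `^ (2 `^ p.[n%:R])).

Lemma isPol_exb (f : nat -> \bar R) :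
  (exists a, isPol f a) -> exists a, `[< isPol f a >].
Proof. by case=> a Ha; exists a; apply/asboolP. Qed.

Definition iotaC (f : nat -> \bar R) : cplx :=
  match pselect (exists a, isPol f a) with
  | left H => Pol (ex_minn (isPol_exb H))
  | right _ =>
      if pselect (isExp f) then Exp
      else if pselect (is2Exp f) then TwoExp
      else if pselect (forall n, f n != +oo%E) then Fin
      else Omega
  end.

End Iota.

(* Main.v *)
Require Import Defs.
From mathcomp Require Import all_boot all_order all_algebra.
From mathcomp Require Import all_classical all_reals.
From mathcomp Require Import ereal esum exp.
From Stdlib Require List Permutation.
Import Defs.
Set Implicit Arguments.
Unset Strict Implicit.
Unset Printing Implicit Defensive.


Section TermLemmas.
Variables (F : finType) (V : Type).
Local Notation term := (term F V).

Lemma term_ind' (P : term -> Prop) :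
  (forall x, P (Var x)) ->
  (forall f b ts, (forall u, List.In u ts -> P u) -> P (Fun f b ts)) ->
  forall t, P t.
Proof.
move=> HV HF; fix IH 1 => t; case: t => [x|f b ts]; first exact: HV.
apply: HF; elim: ts => [|a l IHl] u /=; first by case.
case=> [<-|Hu]; first exact: IH.
exact: IHl.
Qed.

Lemma map_ext_In (A B : Type) (f g : A -> B) (s : seq A) :
  (forall x, List.In x s -> f x = g x) -> map f s = map g s.
Proof.
elim: s => //= a s IH H; rewrite H; last by left.
by rewrite IH // => x Hx; apply: H; right.
Qed.

Lemma allIn (A : Type) (p : pred A) (s : seq A) :
  all p s <-> (forall x, List.In x s -> p x).
Proof.
elim: s => //= a s IH; split.
  by case/andP=> pa /IH H x [<-|/H].
move=> H; rewrite H /=; last by left.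
by apply/IH => x Hx; apply: H; right.
Qed.

Lemma In_cat (A : Type) (x : A) s1 s2 :
  List.In x (s1 ++ s2) <-> List.In x s1 \/ List.In x s2.
Proof.
elim: s1 => /=; first by split; [right|case].
move=> a s IH; split.
  by case=> [->|/IH [H|H]]; [left; left|left; right|right].
by case=> [[->|H]|H]; [left|right; apply/IH; left|right; apply/IH; right].
Qed.

Lemma In_flatten (A : Type) (x : A) (l : seq (seq A)) :
  List.In x (flatten l) <-> exists s, List.In s l /\ List.In x s.
Proof.
elim: l => /=; first by split=> // [[s []]].
move=> s l IH; rewrite In_cat IH; split.
  by case=> [H|[s' [H1 H2]]]; [exists s; split; [left|]|exists s'; split; [right|]].
by case=> s' [[<-|H1] H2]; [left|right; exists s'].
Qed.

Lemma mapE (A B : Type) (f : A -> B) s : map f s = List.map f s.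
Proof. by elim: s => //= a s ->. Qed.

Lemma In_map (A B : Type) (f : A -> B) s x : List.In x s -> List.In (f x) (map f s).
Proof. rewrite mapE; exact: List.in_map. Qed.

Lemma In_map_iff (A B : Type) (f : A -> B) s y :
  List.In y (map f s) <-> exists x, f x = y /\ List.In x s.
Proof. rewrite mapE; exact: List.in_map_iff. Qed.

Lemma In_map_vars (x : V) (ts : seq term) :
  List.In x (flatten (map (@vars F V) ts)) <-> exists u, List.In u ts /\ List.In x (vars u).
Proof.
rewrite In_flatten; split.
  case=> s [/In_map_iff [u [<- Hu]] Hx]; by exists u.
case=> u [Hu Hx]; exists (vars u); split=> //; exact: In_map.
Qed.

Lemma onth_map (A B : Type) (f : A -> B) s i : onth (map f s) i = omap f (onth s i).
Proof. by elim: s i => [|a s IH] [|i] //=. Qed.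


Lemma onth_In (A : Type) (s : seq A) i u : onth s i = Some u -> List.In u s.
Proof. elim: s i => [|a s IH] [|i] //=; [by case=> <-; left|by move/IH; right]. Qed.

Lemma flat_noann (t : term) : noann t -> flat t = t.
Proof.
elim/term_ind': t => //= f b ts IH /andP [/negbTE -> H].
by congr Fun; rewrite -[RHS]map_id; apply: map_ext_In => u Hu; apply: IH => //; move/allIn: H; apply.
Qed.

Lemma noann_flat (t : term) : noann (flat t).
Proof.
elim/term_ind': t => //= f b ts IH; apply/allIn => u /In_map_iff [w [<- Hw]]; exact: IH.
Qed.

Lemma flat_flat (t : term) : flat (flat t) = flat t.
Proof. exact/flat_noann/noann_flat. Qed.

Lemma flat_sharpD D (t : term) : flat (sharpD D t) = flat t.
Proof.
elim/term_ind': t => //= f b ts IH; congr Fun; rewrite -map_comp; exact: map_ext_In.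
Qed.

Lemma flat_subst sg (t : term) : flat (subst sg t) = subst (fun x => flat (sg x)) (flat t).
Proof.
elim/term_ind': t => //= f b ts IH; congr Fun; rewrite -!map_comp; exact: map_ext_In.
Qed.

Lemma subst_ext sg sg' (t : term) :
  (forall x, List.In x (vars t) -> sg x = sg' x) -> subst sg t = subst sg' t.
Proof.
elim/term_ind': t => /= [x H|f b ts IH H]; first by apply: H; left.
congr Fun; apply: map_ext_In => u Hu; apply: IH => // x Hx; apply: H.
by apply/In_map_vars; exists u.
Qed.

Lemma noann_subst_var sg (t : term) x :
  noann (subst sg t) -> List.In x (vars t) -> noann (sg x).
Proof.
elim/term_ind': t => [y|f b ts IH] /=; first by move=> H [<-|[]].
move=> /andP [_ H] /(proj1 (In_map_vars _ _)) [u [Hu Hx]].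
apply: IH (Hu) _ Hx; move/allIn: H; apply; exact: In_map Hu.
Qed.

Lemma wf_subst_var ar D sg (t : term) x :
  wf ar D (subst sg t) -> List.In x (vars t) -> wf ar D (sg x).
Proof.
elim/term_ind': t => [y|f b ts IH] /=; first by move=> H [<-|[]].
move=> /and3P [_ _ H] /(proj1 (In_map_vars _ _)) [u [Hu Hx]].
apply: IH (Hu) _ Hx; move/allIn: H; apply; exact: In_map Hu.
Qed.

Lemma wf_subst ar D sg (t : term) :
  wf ar D t -> (forall x, List.In x (vars t) -> wf ar D (sg x)) -> wf ar D (subst sg t).
Proof.
elim/term_ind': t => /= [y _ H|f b ts IH /and3P [Hs Hb H] Hx]; first by apply: H; left.
rewrite size_map Hs Hb /=; apply/allIn => w /In_map_iff [u [<- Hu]].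
apply: IH => //; first by move/allIn: H; apply.
by move=> x Hxu; apply: Hx; apply/In_map_vars; exists u.
Qed.

Lemma wf_sharpD ar D (t : term) : wf ar D t -> noann t -> wf ar D (sharpD D t).
Proof.
elim/term_ind': t => //= f b ts IH /and3P [Hs _ H] /andP [_ Hn].
rewrite size_map Hs implybb /=; apply/allIn => w /In_map_iff [u [<- Hu]].
apply: IH => //; [move/allIn: H|move/allIn: Hn]; by apply.
Qed.

Lemma wf_flat ar D (t : term) : wf ar D t -> wf ar D (flat t).
Proof.
elim/term_ind': t => //= f b ts IH /and3P [Hs _ H].
rewrite size_map Hs /=; apply/allIn => w /In_map_iff [u [<- Hu]].
by apply: IH => //; move/allIn: H; apply.
Qed.

Lemma subterm_cat (t : term) p q u w :
  subterm t p = Some u -> subterm u q = Some w -> subterm t (p ++ q) = Some w.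
Proof.
elim: p t => [|i p IH] t /=; first by case=> ->.
by case: t => // f b ts; case: (onth ts i) => // v; apply: IH.
Qed.

Lemma subterm_flat (t : term) p : subterm (flat t) p = omap (@flat F V) (subterm t p).
Proof.
elim: p t => [|i p IH] [x|f b ts] //=; rewrite onth_map.
by case: (onth ts i).
Qed.

Lemma subterm_noann (t : term) p u : noann t -> subterm t p = Some u -> noann u.
Proof.
elim: p t => [|i p IH] [x|f b ts] //=; try by move=> ? [<-].
move=> /andP [_ H]; case E: (onth ts i) => [v|] //; apply: IH.
by move/allIn: H; apply; exact: onth_In E.
Qed.

Lemma subterm_wf ar D (t : term) p u : wf ar D t -> subterm t p = Some u -> wf ar D u.
Proof.
elim: p t => [|i p IH] [x|f b ts] //=; try by move=> ? [<-].
move=> /and3P [_ _ H]; case E: (onth ts i) => [v|] //; apply: IH.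
by move/allIn: H; apply; exact: onth_In E.
Qed.

Lemma vars_pos sg (t : term) x : List.In x (vars t) ->
  exists q, subterm t q = Some (Var x) /\ subterm (subst sg t) q = Some (sg x).
Proof.
elim/term_ind': t => [y|f b ts IH] /=; first by case=> [<-|[]]; exists [::].
move=> /(proj1 (In_map_vars _ _)) [u [Hu Hx]].
have [q [H1 H2]] := IH _ Hu Hx.
have [i Hi] : exists i, onth ts i = Some u.
  elim: ts Hu {IH} => //= a l IHl [<-|/IHl [i Hi]]; [by exists 0|by exists i.+1].
exists (i :: q) => /=; rewrite Hi onth_map Hi /=; by split.
Qed.

End TermLemmas.

Section Upd.
Variables (F : finType) (V : Type).
Local Notation term := (term F V).

Definition upd (n i : nat) (g : term -> term) (ts : seq term) :=
  [seq (if ju.1 == i then g ju.2 else ju.2) | ju <- zip (iota n (size ts)) ts].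

Lemma size_upd n i g ts : size (upd n i g ts) = size ts.
Proof. by rewrite /upd size_map size_zip size_iota minnn. Qed.

Lemma in_upd n i g ts x : List.In x (upd n i g ts) ->
  List.In x ts \/ exists u, [/\ onth ts (i - n) = Some u, (n <= i)%N & x = g u].
Proof.
elim: ts n => [|t ts IH] n //=; rewrite /upd /=.
case: eqP => [->|ne] [Hx|Hx].
- by right; exists t; rewrite subnn.
- case: (IH _ Hx) => [H|[u [Hu Hle ->]]]; first by left; right.
  by move: Hle; rewrite ltnn.
- by left; left.
- case: (IH _ Hx) => [H|[u [Hu Hle ->]]]; first by left; right.
  right; exists u; split => //; last exact: ltnW.
  by rewrite -(subnSK Hle).
Qed.

Lemma map_upd n i g g' h ts : (forall u, h (g u) = g' (h u)) ->
  map h (upd n i g ts) = upd n i g' (map h ts).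
Proof.
move=> H; elim: ts n => [|t ts IH] n //=; rewrite /upd /=.
have := IH n.+1; rewrite /upd => ->. by case: (n == i); rewrite ?H.
Qed.

Lemma replace_cons i p f b ts (Y : term) :
  replace (i :: p) (Fun f b ts) Y = Fun f b (upd 0 i (fun u => replace p u Y) ts).
Proof. by []. Qed.

Lemma flat_replace p (S Y : term) : flat (replace p S Y) = replace p (flat S) (flat Y).
Proof.
elim: p S => [|i p IH] [x|f b ts] //=.
rewrite -/(upd 0 i (fun u => replace p u Y) ts).
rewrite (@map_upd 0 i _ (fun u => replace p u (flat Y))) //.

Qed.

Lemma wf_replace ar D p (S Y : term) : wf ar D S -> wf ar D Y -> wf ar D (replace p S Y).
Proof.
elim: p S => [|i p IH] [x|f b ts] //= /and3P [Hs Hb H] HY.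
rewrite -/(upd 0 i (fun u => replace p u Y) ts) size_upd Hs Hb /=.
apply/allIn => x /in_upd [Hx|[u [Hu _ ->]]]; first by move/allIn: H; apply.
apply: IH HY; move/allIn: H; apply; exact: onth_In Hu.
Qed.

End Upd.

Section Main.
Variables (R : realType) (F : finType) (ar : F -> nat) (V : Type).
Variable (Rs : seq (rule R F V)).
Local Notation term := (term F V).
Local Notation D := (defsR Rs).
Local Notation P := (ADPs Rs).

Lemma hasIn (A : Type) (p : pred A) s x : List.In x s -> p x -> has p s.
Proof. elim: s => //= a s IH [->|H] px; first by rewrite px. by rewrite IH ?orbT. Qed.

Lemma defsP_ADPs : defsP P = D.
Proof. by apply: funext => f; rewrite /defsP /ADPs has_map. Qed.

Lemma In_ADPs a : List.In a P <-> exists r, a = canonical_adp Rs r /\ List.In r Rs.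
Proof.
rewrite /ADPs In_map_iff; split; case=> r [H1 H2]; exists r; by split.
Qed.

Lemma lhs_shape (HP : is_PTRS ar Rs) r : List.In r Rs ->
  exists f us, lhs r = Fun f false us /\ f \in D.
Proof.
move=> Hr; have [[f [b [ts E]]] /andP [_ Hn] _ _] := HP r Hr.
move: Hn; rewrite E /= => /andP [/negbTE Eb _]; exists f, ts; split; first by rewrite Eb.
by rewrite unfold_in /defsR; apply: (hasIn Hr); rewrite E /= eqxx.
Qed.

Lemma NF_R_sub u q w : NF_R Rs u -> subterm u q = Some w -> NF_R Rs w.
Proof.
move=> Hu Hq [pi [r [sg [Hr Hs]]]]; apply: Hu; exists (q ++ pi), r, sg; split=> //.
exact: subterm_cat Hq Hs.
Qed.

Lemma NF_P_NF_R (HP : is_PTRS ar Rs) u : NF_P P u -> NF_R Rs u.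
Proof.
move=> Hu [pi [r [sg [Hr Hs]]]]; apply: Hu.
have [f [us [E Hf]]] := lhs_shape HP Hr.
exists pi, (canonical_adp Rs r), (fun x => flat (sg x)), f, false, (map (subst sg) us).
split.
- by apply/In_ADPs; exists r.
- by rewrite Hs E.
- by rewrite defsP_ADPs Hf.
- have [_ /andP [_ Hn] _ _] := HP r Hr.
  have key := flat_subst sg (lhs r); rewrite (flat_noann Hn) in key.
  rewrite -[Fun f false _]/(subst sg (Fun f false us)) -E; exact: key.
Qed.

Lemma NF_R_NF_P u : noann u -> NF_R Rs u -> NF_P P u.
Proof.
move=> Hn Hu [pi [a [sg [f [b [ts [Ha Hs _ Hfl]]]]]]]; apply: Hu.
have [r [Ea Hr]] := (proj1 (In_ADPs a)) Ha; rewrite Ea in Hfl.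
have Hn' := subterm_noann Hn Hs.
exists pi, r, sg; split=> //; by rewrite Hs -(flat_noann Hn') Hfl.
Qed.


Lemma In_onth (A : Type) (s : seq A) x : List.In x s -> exists i, onth s i = Some x.
Proof. elim: s => //= a s IH [->|/IH [i Hi]]; [by exists 0|by exists i.+1]. Qed.

Fixpoint Invb (S : term) : bool :=
  match S with
  | Var _ => true
  | Fun f b ts => (((f \in D) && ~~ `[< NF_R Rs (flat (Fun f b ts)) >]) ==> b) && all Invb ts
  end.

Lemma Invb_head f b ts : Invb (Fun f b ts) -> f \in D -> ~ NF_R Rs (flat (Fun f b ts)) -> b.
Proof.
move=> /andP [H _] Hf Hn; move: H; rewrite Hf /=; case: asboolP => //.
Qed.

Lemma Invb_sub S q X : Invb S -> subterm S q = Some X -> Invb X.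
Proof.
elim: q S => [|i p IH] [x|f b ts] //=; try by move=> ? [<-].
move=> /andP [_ H]; case E: (onth ts i) => [v|] //; apply: IH.
by move/allIn: H; apply; exact: onth_In E.
Qed.

Lemma Invb_NF u : noann u -> NF_R Rs u -> Invb u.
Proof.
elim/term_ind': u => // f b ts IH Hn HNF /=.
case: asboolP => [_|HN]; last first.
  by exfalso; apply: HN; rewrite -[Fun f false _]/(flat (Fun f b ts)) (flat_noann Hn).
rewrite andbF /=.
move: Hn => /= /andP [_ Hn]; apply/allIn => u Hu; apply: IH => //.
  by move/allIn: Hn; apply.
have [i Hi] := In_onth Hu; apply: (NF_R_sub (q := [:: i])) HNF _.
by rewrite /= Hi.
Qed.

Lemma Invb_replace p S Y X : Invb S -> Invb Y -> subterm S p = Some X ->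
  ~ NF_R Rs (flat X) -> Invb (replace p S Y).
Proof.
elim: p S => [|i p IH] [x|f b ts] //= HS HY.
case E: (onth ts i) => [u|] // Hu HX.
rewrite -/(upd 0 i (fun u => replace p u Y) ts); apply/andP; split.
  case: b HS => [_|HS]; first by rewrite implybT.
  have Hf : f \notin D.
    apply/negP => Hf; suff : false by []; apply: (@Invb_head f false ts HS Hf) => HNF; apply: HX.
    apply: (NF_R_sub (q := i :: p)) HNF _.
    by rewrite subterm_flat /= E Hu.
  by rewrite (negbTE Hf).
move: HS => /andP [_ H].
apply/allIn => x /in_upd [Hx|[v [Hv _ ->]]]; first by move/allIn: H; apply.
rewrite subn0 E in Hv; case: Hv => <-.
apply: IH Hu HX => //; move/allIn: H; apply; exact: onth_In E.
Qed.

Lemma vars_sharpD (Dp : pred F) (t : term) : vars (sharpD Dp t) = vars t.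
Proof.
elim/term_ind': t => //= f b ts IH; congr flatten; rewrite -map_comp.
exact: map_ext_In.
Qed.

Lemma Invb_subst_sharp sg r : (forall x, List.In x (vars r) -> Invb (sg x)) ->
  Invb (subst sg (sharpD D r)).
Proof.
elim/term_ind': r => [x H|f b ts IH H] /=; first by apply: H; left.
apply/andP; split; first by case: (f \in D); rewrite ?implybT.
apply/allIn => w /In_map_iff [w' [<- /In_map_iff [u [<- Hu]]]].
apply: IH => // x Hx; apply: H; apply/In_map_vars; by exists u.
Qed.

End Main.

Section Steps.
Variables (R : realType) (F : finType) (ar : F -> nat) (V : Type).
Variable (Rs : seq (rule R F V)).
Local Notation term := (term F V).
Local Notation D := (defsR Rs).
Local Notation P := (ADPs Rs).

Definition flp (pu : R * term) : R * term := (pu.1, flat pu.2).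

Lemma step_to_adp (HP : is_PTRS ar Rs) s S res :
  flat S = s -> Invb Rs S -> wf ar D S -> step_R Rs s res ->
  exists a res', [/\ List.In a P, adp_step P S a true res', map flp res' = res &
    forall x, List.In x res' -> Invb Rs x.2 /\ wf ar D x.2].
Proof.
move=> Hfl HI HW [pi [r [sg [Hr Hs HNF ->]]]].
have [f [us [E Hf]]] := lhs_shape HP Hr.
have [_ /andP [Hwl Hnl] _ Hrhs] := HP r Hr.
have HsS : subterm (flat S) pi = Some (subst sg (lhs r)) by rewrite Hfl.
rewrite subterm_flat in HsS.
case E2: (subterm S pi) HsS => [X|] //= [HX].
have HnotNF : ~ NF_R Rs (flat X).
  by move=> H; apply: H; exists [::], r, sg; rewrite HX.
have HnX : noann (subst sg (lhs r)) by rewrite -HX noann_flat.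
have HwX : wf ar D (subst sg (lhs r)) by rewrite -HX; apply: wf_flat; exact: subterm_wf HW E2.
have HI' := Invb_sub HI E2.
case: X E2 HX HnotNF HI' => [x|g bX tsX] E2 HX HnotNF HI'; first by rewrite E in HX.
have Eg : g = f by move: HX; rewrite E /= => -[].
subst g.
have HbX : bX = true := Invb_head HI' Hf HnotNF.
subst bX.
have Hsgx : forall x, List.In x (vars (lhs r)) -> noann (sg x) /\ NF_R Rs (sg x) /\ wf ar D (sg x).
  move=> x Hx; split; first exact: noann_subst_var HnX Hx.
  split; last exact: wf_subst_var HwX Hx.
  have [q [Hq1 Hq2]] := vars_pos sg Hx.
  apply: HNF; exists q; split=> //; move=> Eq; move: Hq1; rewrite Eq E //.
exists (canonical_adp Rs r),
  [seq (pu.1, adp_result true true pi S sg pu.2) | pu <- arhs (canonical_adp Rs r)].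
split.
- by apply/In_ADPs; exists r.
- exists pi, sg, f, tsX; split => //.
  + by apply/In_ADPs; exists r.
  + by rewrite orbT.
  + move=> u [q [Hq Hu]]; apply: NF_R_NF_P.
      exact: subterm_noann HnX Hu.
    by apply: HNF; exists q.
- rewrite /= -!map_comp; apply: map_ext_In => -[p u] Hpu /=.
  have [_ /andP [_ Hnu] Hvu] := Hrhs p u Hpu.
  rewrite /flp /= flat_replace Hfl flat_subst flat_sharpD (flat_noann Hnu); congr pair; congr replace.
  apply: subst_ext => x Hx; apply: flat_noann; exact: (proj1 (Hsgx x (Hvu x Hx))).
- rewrite /= -map_comp => x /In_map_iff [[p u] [<- Hpu]] /=.
  have [_ /andP [Hwu Hnu] Hvu] := Hrhs p u Hpu.
  split.
    apply: Invb_replace HI _ E2 HnotNF; apply: Invb_subst_sharp => y Hy.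
    have [H1 [H2 _]] := Hsgx y (Hvu y Hy); exact: Invb_NF.
  apply: wf_replace HW _; apply: wf_subst; first exact: wf_sharpD.
  rewrite vars_sharpD => y Hy; exact: (proj2 (proj2 (Hsgx y (Hvu y Hy)))).
Qed.

Lemma adp_to_step (HP : is_PTRS ar Rs) u a ann res' :
  adp_step P u a ann res' -> step_R Rs (flat u) (map flp res').
Proof.
move=> [pi [sg [f [ts [Ha [Hs _] Hfl HNF ->]]]]].
have [r [Ea Hr]] := (proj1 (In_ADPs _ a)) Ha; subst a.
have HnX : noann (subst sg (lhs r)) by rewrite -[subst _ _]Hfl noann_flat.
have [_ _ _ Hrhs] := HP r Hr.
exists pi, r, sg; split => //.
- have -> : subterm (flat u) pi = Some (flat (Fun f ann ts)) by rewrite subterm_flat Hs.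
  by rewrite Hfl.
- by move=> w Hw; apply: (NF_P_NF_R HP); exact: HNF.
- rewrite /= -!map_comp; apply: map_ext_In => -[p v] Hpv /=.
  have [_ /andP [_ Hnv] Hvv] := Hrhs p v Hpv.
  rewrite /flp /= flat_replace flat_subst.
  have -> : flat (if ann then sharpD D v else flat (sharpD D v)) = v.
    by case: (ann); rewrite ?flat_flat flat_sharpD flat_noann.
  congr pair; congr replace; apply: subst_ext => x Hx; apply: flat_noann.
  exact: noann_subst_var HnX (Hvv x Hx).
Qed.

End Steps.

Import Order.TTheory GRing.Theory Num.Theory.
Local Open Scope classical_set_scope.
Local Open Scope ring_scope.

Lemma esum_sub (R : realType) (T : choiceType) (A B : set T) (a : T -> \bar R) :
  A `<=` B -> (\esum_(i in A) a i <= \esum_(i in B) a i)%E.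
Proof.
move=> AB; rewrite ge_ereal_sup => //= _ [X [finX XA]] <-; apply: esum_ge.
by exists X => //; split=> //; exact: subset_trans XA AB.
Qed.

Lemma pmap_omap (A B C : Type) (f : B -> C) (g : A -> option B) s :
  pmap (fun i => omap f (g i)) s = map f (pmap g s).
Proof. by elim: s => //= a s ->; case: (g a). Qed.

Lemma pmap_iota_nth (A : Type) (g : nat -> option A) k m (d : A) :
  (forall i, (i < k)%N -> g (m + i)%N <> None) ->
  size (pmap g (iota m k)) = k /\
  forall i, (i < k)%N -> Some (nth d (pmap g (iota m k)) i) = g (m + i)%N.
Proof.
elim: k m => [|k IH] m H //=.
case E: (g m) => [x|]; last by exfalso; apply: (H 0%N); rewrite ?addn0.
have [H1 H2] : size (pmap g (iota m.+1 k)) = k /\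
  forall i, (i < k)%N -> Some (nth d (pmap g (iota m.+1 k)) i) = g (m.+1 + i)%N.
  by apply: IH => i Hi; rewrite addSnnS; apply: H.
split; first by rewrite /= H1.
move=> [|i] Hi /=; first by rewrite addn0 E.
by rewrite H2 // addSnnS.
Qed.

Lemma k_unique (g : nat -> Prop) k k' :
  (forall i, g i <-> (i < k)%N) -> (forall i, g i <-> (i < k')%N) -> k = k'.
Proof.
move=> H1 H2; apply/eqP; rewrite eqn_leq; apply/andP; split; rewrite leqNgt; apply/negP => Hlt.
  by move: (proj1 (H2 _) (proj2 (H1 _) Hlt)); rewrite ltnn.
by move: (proj1 (H1 _) (proj2 (H2 _) Hlt)); rewrite ltnn.
Qed.

Lemma omap_None (A B : Type) (f : A -> B) x : omap f x <> None <-> x <> None.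
Proof. by case: x. Qed.

Section TreesA.
Variables (R : realType) (F : finType) (ar : F -> nat) (V : Type).
Variable (Rs : seq (rule R F V)).
Local Notation term := (term F V).
Local Notation D := (defsR Rs).
Local Notation P := (ADPs Rs).

Lemma constr_noann (u : term) : constr_term D u -> noann u.
Proof.
elim/term_ind': u => //= f b ts IH /and3P [Hb _ H]; rewrite Hb /=.
by apply/allIn => u Hu; apply: IH => //; move/allIn: H; apply.
Qed.

Lemma flat_sharp_root (t : term) : basic D t -> flat (sharp_root t) = t.
Proof.
case: t => // f b ts /and3P [/negbTE -> _ H] /=; congr Fun.
rewrite -[RHS]map_id; apply: map_ext_In => u Hu; apply: flat_noann; apply: constr_noann.
by move/allIn: H; apply.
Qed.

Lemma chain_to_RST (HP : is_PTRS ar Rs) (t : term) lab info :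
  basic D t -> isChainTree ar P lab info (sharp_root t) ->
  isRST ar Rs (fun v => omap (@flp R F V) (lab v)) t /\
  (edlPS P lab info <= edl (fun v => omap (@flp R F V) (lab v)))%E.
Proof.
move=> Hb [[T1 T2 T3] L0 Hlab Hstep]; split; first split.
- have ON : forall v, omap (@flp R F V) (lab v) <> None <-> lab v <> None.
    by move=> v; exact: omap_None.
  split => /=.
  + exact/ON.
  + by move=> v i /ON /T2 /ON.
  + move=> v /ON /T3 [k Hk]; exists k => i; split.
      by move/ON/Hk.
    by move/Hk/ON.
- by rewrite L0 /flp /= flat_sharp_root.
- move=> v p u; case E: (lab v) => [[p' u']|] //= [<- <-].
  have [H1 H2] := Hlab _ _ _ E; split=> //=; rewrite noann_flat andbT.
  by apply: wf_flat; rewrite -defsP_ADPs.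
- move=> v p u k; case E: (lab v) => [[p' u']|] //= [Ep Eu] Hk Hk0.
  subst p' u.
  have Hk' : forall i, lab (i :: v) <> None <-> (i < k)%N.
    by move=> i; rewrite -Hk omap_None.
  have [res' [Hst Hperm]] := Hstep _ _ _ _ E Hk' Hk0.
  exists (map (@flp R F V) res'); split; first exact: (adp_to_step HP Hst).
  rewrite /children (pmap_omap (@flp R F V) (fun i => lab (i :: v))) -map_comp.
  have -> : [seq ((@flp R F V) \o (fun pu : R * term => (pu.1 / p, pu.2))) i | i <- children lab v k]
    = map (@flp R F V) [seq (pu.1 / p, pu.2) | pu <- children lab v k].
    by rewrite -map_comp.
  rewrite !mapE; apply: Permutation.Permutation_map; by rewrite -!mapE.
- rewrite /edlPS /edl.
  have -> : (fun v => (lab_p (omap (@flp R F V) (lab v)))%:E) = (fun v => (lab_p (lab v))%:E).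
    by apply: funext => v; case: (lab v).
  apply: esum_sub => v [[Hv [i Hi]] _]; split; first exact/omap_None.
  by exists i; apply/omap_None.
Qed.

End TreesA.

Lemma In_nth (A : Type) (d : A) (s : seq A) i : (i < size s)%N -> List.In (nth d s i) s.
Proof. elim: s i => [|a s IH] [|i] //= Hi; [by left|right; exact: IH]. Qed.

Lemma Invb_constr (R : realType) (F : finType) (V : Type) (Rs : seq (rule R F V)) (u : term F V) :
  constr_term (defsR Rs) u -> Invb Rs u.
Proof.
elim/term_ind': u => //= f b ts IH /and3P [Hb Hf H].
rewrite (negbTE Hf) /=; apply/allIn => u Hu; apply: IH => //; move/allIn: H; by apply.
Qed.

Lemma Rel_root (R : realType) (F : finType) (ar : F -> nat) (V : Type) (Rs : seq (rule R F V)) (t : term F V) :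
  wf ar (defsR Rs) t && basic (defsR Rs) t ->
  [/\ flat (sharp_root t) = t, Invb Rs (sharp_root t) & wf ar (defsR Rs) (sharp_root t)].
Proof.
move=> /andP [Hw Hb]; split; first exact: (flat_sharp_root Hb).
  case: t Hw Hb => // f b ts _ /and3P [_ Hf H] /=; rewrite implybT /=.
  by apply/allIn => u Hu; apply: Invb_constr; move/allIn: H; apply.
case: t Hw Hb => // f b ts /and3P [Hs _ H] /and3P [_ Hf _] /=; by rewrite Hs Hf H.
Qed.

Section TreesB.
Variables (R : realType) (F : finType) (ar : F -> nat) (V : Type).
Variable (Rs : seq (rule R F V)).
Local Notation term := (term F V).
Local Notation D := (defsR Rs).
Local Notation P := (ADPs Rs).
Variables (t : term) (lab : seq nat -> option (R * term)).

Definition Rel (S s : term) := [/\ flat S = s, Invb Rs S & wf ar D S].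

Definition kids (As : seq term) v k :=
  pmap (fun i => omap (fun pu : R * term => (pu.1, nth t As i)) (lab (i :: v))) (iota 0 k).

Definition Good v S (d : adp R F V * seq term) : Prop :=
  forall p s k, lab v = Some (p, s) -> (forall i, lab (i :: v) <> None <-> (i < k)%N) ->
  (0 < k)%N ->
  [/\ List.In d.1 P,
      (forall i p' s', lab (i :: v) = Some (p', s') -> Rel (nth t d.2 i) s') &
      exists res, adp_step P S d.1 true res /\
        Permutation.Permutation res [seq (pu.1 / p, pu.2) | pu <- kids d.2 v k]].

Definition choice_at v S : adp R F V * seq term :=
  match pselect (exists d, Good v S d) with
  | left H => projT1 (cid H)
  | right _ => (ADP t [::] true, [::])
  end.

Lemma choice_atP v S : (exists d, Good v S d) -> Good v S (choice_at v S).
Proof. by rewrite /choice_at; case: pselect => // H _; exact: projT2 (cid H). Qed.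

Fixpoint Aof v : term :=
  match v with
  | [::] => sharp_root t
  | i :: v' => nth t (choice_at v' (Aof v')).2 i
  end.

Definition labC v := omap (fun pu : R * term => (pu.1, Aof v)) (lab v).
Definition infoC v := ((choice_at v (Aof v)).1, true).

Hypothesis HP : is_PTRS ar Rs.
Hypothesis HT : isRST ar Rs lab t.

Lemma good_ex v p s S : lab v = Some (p, s) -> Rel S s -> exists d, Good v S d.
Proof.
move=> Hl [HS1 HS2 HS3].
case: (pselect (exists k, (forall i, lab (i :: v) <> None <-> (i < k)%N) /\ (0 < k)%N)); last first.
  move=> Hn; exists (ADP t [::] true, [::]) => p' s' k _ Hk Hk0; exfalso; apply: Hn.
  by exists k.
case=> k [Hk Hk0].
have [_ _ _ HT4] := HT.
have [res [Hst Hperm]] := HT4 _ _ _ _ Hl Hk Hk0.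
have [a [res' [Ha Hst' Hmap Hinv]]] := step_to_adp HP HS1 HS2 HS3 Hst.
set C := children lab v k in Hperm.
have Hperm' : Permutation.Permutation [seq (pu.1 / p, pu.2) | pu <- C] (List.map (@flp R F V) res').
  by rewrite -mapE Hmap; apply: Permutation.Permutation_sym.
have [l3 [Hl3 Hp3]] := Permutation.Permutation_map_inv _ _ Hperm'.
rewrite -mapE in Hl3.
have HCk : forall i, (i < k)%N -> (0 + i)%N :: v = i :: v by [].
have [HCs HCn] := @pmap_iota_nth _ (fun i => lab (i :: v)) k 0 (0, t)
   (fun i Hi => proj2 (Hk i) Hi).
have Hs3 : size l3 = k by rewrite -(size_map (@flp R F V)) -Hl3 size_map.
have Hl3i : forall i p' s', lab (i :: v) = Some (p', s') ->
   (i < k)%N /\ nth (0, t) l3 i = (p' / p, (nth (0, t) l3 i).2) /\ flat (nth (0, t) l3 i).2 = s'.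
  move=> i p' s' Hi.
  have Hik : (i < k)%N by apply/Hk; rewrite Hi.
  have := HCn i Hik; rewrite add0n Hi => -[Hn].
  have := congr1 (fun l => nth (flp (0, t)) l i) Hl3.
  rewrite (nth_map (0, t)) ?HCs // (nth_map (0, t)) ?Hs3 // -/C Hn /flp /=.
  case: (nth (0, t) l3 i) => q T [<- <-]; by split.
exists (a, map snd l3) => p0 s0 k0 Hl0 Hk0' _.
move: Hl0; rewrite Hl => -[Ep Es]; subst p0 s0.
have Ek := k_unique Hk Hk0'; subst k0.
split => //.
- move=> i p' s' Hi; have [Hik [_ Hfl]] := Hl3i _ _ _ Hi.
  rewrite /= (nth_map (0, t)) ?Hs3 //.
  have Hin : List.In (nth (0, t) l3 i) res'.
    apply: Permutation.Permutation_in (Permutation.Permutation_sym Hp3) _.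
    by apply: In_nth; rewrite Hs3.
  by have [H1 H2] := Hinv _ Hin; split.
- exists res'; split => //.
  suff -> : [seq (pu.1 / p, pu.2) | pu <- kids [seq i.2 | i <- l3] v k] = l3 by [].
  have [HKs HKn] := @pmap_iota_nth _
     (fun i => omap (fun pu : R * term => (pu.1, nth t [seq i.2 | i <- l3] i)) (lab (i :: v)))
     k 0 (0, t) (fun i Hi => proj2 (omap_None _ _) (proj2 (Hk i) Hi)).
  apply: (@eq_from_nth _ (0, t)); first by rewrite size_map /kids HKs Hs3.
  rewrite size_map /kids HKs => i Hik.
  rewrite (nth_map (0, t)) ?HKs //.
  have := HKn i Hik; rewrite add0n.
  case Ei: (lab (i :: v)) => [[p' s']|]; last by exfalso; move: Ei; apply/Hk.
  move=> -[->] /=.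
  have [_ [E3 _]] := Hl3i _ _ _ Ei.
  by rewrite (nth_map (0, t)) ?Hs3 // {2}E3.
Qed.

Hypothesis Hbt : wf ar D t && basic D t.

Lemma Rel_A v p s : lab v = Some (p, s) -> Rel (Aof v) s.
Proof.
elim: v p s => [|i v IH] p s Hl.
  have [_ L0 _ _] := HT; rewrite L0 in Hl; case: Hl => _ <-.
  have [H1 H2 H3] := Rel_root Hbt; by split.
have [[T1 T2 T3] _ _ _] := HT.
have Hv : lab v <> None by apply: (T2 v i); rewrite Hl.
case Ev: (lab v) Hv => [[p0 s0]|] // _.
have HR := IH _ _ Ev.
have Hv' : lab v <> None by rewrite Ev.
have [k Hk] := T3 v Hv'.
have Hik : (i < k)%N by apply/Hk; rewrite Hl.
have Hk0 : (0 < k)%N by apply: leq_ltn_trans Hik.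
have [d Hd] := good_ex Ev HR.
have [_ Hch _] := choice_atP (ex_intro _ d Hd) Ev Hk Hk0.
exact: Hch _ _ _ Hl.
Qed.

Lemma chainC : isChainTree ar P labC infoC (sharp_root t).
Proof.
have [[T1 T2 T3] L0 T5 T6] := HT.
have ON : forall v, labC v <> None <-> lab v <> None by move=> v; exact: omap_None.
split.
- split.
  + exact/ON.
  + by move=> v i /ON /T2 /ON.
  + move=> v /ON /T3 [k Hk]; exists k => i; split.
      by move/ON/Hk.
    by move/Hk/ON.
- by rewrite /labC L0.
- move=> v p u; rewrite /labC; case E: (lab v) => [[p' s]|] //= [<- <-].
  have [H1 /andP [H2 _]] := T5 _ _ _ E; split => //.
  by rewrite defsP_ADPs; have [_ _ W] := Rel_A E.
- move=> v p u k; rewrite /labC; case E: (lab v) => [[p' s]|] //= [Ep Eu] Hk Hk0.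
  subst p' u.
  have Hk' : forall i, lab (i :: v) <> None <-> (i < k)%N.
    by move=> i; rewrite -Hk; exact: iff_sym (ON _).
  have [d Hd] := good_ex E (Rel_A E).
  have [_ _ [res [H1 H2]]] := choice_atP (ex_intro _ d Hd) E Hk' Hk0.
  by exists res; split.
Qed.

Lemma edlC : edlPS P labC infoC = edl lab.
Proof.
have [[T1 T2 T3] L0 T5 T6] := HT.
rewrite /edlPS /edl.
have -> : (fun v => (lab_p (labC v))%:E) = (fun v => (lab_p (lab v))%:E).
  by apply: funext => v; rewrite /labC; case: (lab v) => [[]|].
have -> : [set v | inner labC v /\ List.In (infoC v).1 P /\ (infoC v).2] = [set v | inner lab v].
  apply: funext => v; apply: propext; split.
    case=> [[Hv [i Hi]] _]; split; first exact: (proj1 (omap_None _ _) Hv).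
    by exists i; exact: (proj1 (omap_None _ _) Hi).
  case=> Hv [i Hi]; split; first split.
  - exact: (proj2 (omap_None _ _) Hv).
  - by exists i; exact: (proj2 (omap_None _ _) Hi).
  case E: (lab v) Hv => [[p s]|] // _; split => //.
  have Hv' : lab v <> None by rewrite E.
  have [k Hk] := T3 v Hv'.
  have Hik : (i < k)%N by apply/Hk.
  have Hk0 : (0 < k)%N by apply: leq_ltn_trans Hik.
  have [d Hd] := good_ex E (Rel_A E).
  by have [H1 _ _] := choice_atP (ex_intro _ d Hd) E Hk Hk0.
by [].
Qed.

End TreesB.

Theorem mainTheorem1 (R : realType) (F : finType) (ar : F -> nat) (V : Type)
    (Rs : seq (rule R F V)) :
  is_PTRS ar Rs ->
  (forall t : term F V,
      wf ar (defsR Rs) t && basic (defsR Rs) t ->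
      edh ar Rs t = edhPS ar (ADPs Rs) (ADPs Rs) t) /\
  iotaC (eirc ar Rs) = iotaC (eircPS ar (ADPs Rs) (ADPs Rs)).
Proof.
move=> HP.
have Hedh : forall t : term F V, wf ar (defsR Rs) t && basic (defsR Rs) t ->
    edh ar Rs t = edhPS ar (ADPs Rs) (ADPs Rs) t.
  move=> t Hbt; have Hb : basic (defsR Rs) t by case/andP: Hbt.
  apply/eqP; rewrite eq_le; apply/andP; split.
    apply: ge_ereal_sup => _ [lab HT <-].
    rewrite -(edlC HP HT Hbt); apply: ereal_sup_ubound.
    exists (labC ar Rs t lab, infoC ar Rs t lab) => //.
    exact: (chainC HP HT Hbt).
  apply: ge_ereal_sup => _ [[lab info] HC <-] /=.
  have [HR Hle] := chain_to_RST HP Hb HC.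
  apply: Order.POrderTheory.le_trans Hle _; apply: ereal_sup_ubound.
  by exists (fun v => omap (@flp R F V) (lab v)).
split => //.
congr iotaC; apply: funext => n; rewrite /eirc /eircPS defsP_ADPs.
congr ereal_sup; apply: funext => x; apply: propext; split; case=> t Ht <-; exists t => //;
  have Hbt : wf ar (defsR Rs) t && basic (defsR Rs) t by move: Ht => /= /andP [].
  by rewrite Hedh.
by rewrite Hedh.
Qed.
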